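(* Let $n\ge2$ and consider Gram blocks of a fully symmetric solution: $P_1,\dots,P_n\in\mathbb{R}^{d\times p}$ with $P_i^TP_i=G^A$ for all $i$ and $P_i^TP_j=G^C$ for all $i\ne j$, and let $G^T=\frac1n(G^A+(n-1)G^C)$. Let $\xi_{\bar x},\xi_x\in\mathbb{R}^p$, $\bar x_i=P_i\xi_{\bar x}$ and $x_i=P_i\xi_x$. Then the constraints $\bar x_i=\frac1n\sum_{j=1}^nx_j$ for all $i=1,\dots,n$ are equivalent to $\xi_{\bar x}^TG^A\xi_{\bar x}+\xi_x^TG^T(\xi_x-2\xi_{\bar x})=0$.
   Context: This arises in performance estimation problems for distributed optimization, where a point common to all agents (here the agent average $\bar x=\frac1n\sum_jx_j$) is copied into each agent's variables as $\bar x_i$. *)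

(* Defs.v *)
From HB Require Import structures.
From mathcomp Require Import all_boot all_order all_algebra.
Set Implicit Arguments. Unset Strict Implicit. Unset Printing Implicit Defensive.
Import Order.TTheory GRing.Theory Num.Theory.
Local Open Scope ring_scope.

Definition GramT (R : realFieldType) (p n : nat) (GA GC : 'M[R]_p) : 'M[R]_p :=
  n%:R^-1 *: (GA + (n.-1)%:R *: GC).

(* Main.v *)
Require Import Defs.
From HB Require Import structures.
From mathcomp Require Import all_boot all_order all_algebra.
Import Order.TTheory GRing.Theory Num.Theory.
Local Open Scope ring_scope.

Lemma tr11 (R : pzRingType) (M : 'M[R]_1) : M^T = M.
Proof. by apply/matrixP => i j; rewrite !ord1 mxE. Qed.

Lemma sq0 (R : realFieldType) d (v : 'cV[R]_d) : v^T *m v = 0 -> v = 0.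
Proof.
move=> /matrixP /(_ 0 0); rewrite !mxE => H.
have H2 : \sum_(k < d) (v k 0) ^+ 2 = 0.
  by rewrite -[RHS]H; apply: eq_bigr => k _; rewrite ?mxE expr2.
apply/matrixP => k j; rewrite ord1 mxE.
have := (@psumr_eq0P _ _ _ _ (fun i _ => sqr_ge0 (v i 0)) H2 k isT).
by move/eqP; rewrite sqrf_eq0 => /eqP.
Qed.

Theorem proposition11 (R : realFieldType) (n d p : nat) (hn : (2 <= n)%N)
  (P : 'I_n -> 'M[R]_(d, p)) (GA GC : 'M[R]_p)
  (hA : forall i, (P i)^T *m P i = GA)
  (hC : forall i j, i != j -> (P i)^T *m P j = GC)
  (xib xi : 'cV[R]_p) :
  (forall i : 'I_n, P i *m xib = n%:R^-1 *: \sum_(j < n) (P j *m xi))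
  <->
  xib^T *m GA *m xib + xi^T *m GramT n GA GC *m (xi - 2%:R *: xib) = 0.
Proof.
set s := n%:R^-1 *: _.
set GT := GramT n GA GC.
have n0 : n%:R != 0 :> R by rewrite pnatr_eq0 -lt0n; apply: leq_trans hn.
have F1 : forall i, (P i)^T *m s = GT *m xi.
  move=> i; rewrite /s /GT /GramT -!scalemxAr -!scalemxAl; congr (_ *: _).
  rewrite mulmx_sumr (bigD1 i) //= mulmxA hA.
  under eq_bigr => j ji do rewrite mulmxA hC 1?eq_sym //.
  rewrite sumr_const cardC1 card_ord -scaler_nat mulmxDl scalemxAl.
  by rewrite -[n.-1%:R *: GC *m xi]scalemxAl.
have i0 : 'I_n by exists 0%N; apply: leq_trans hn.
have F2 : s^T *m s = xi^T *m GT *m xi.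
  have -> : s^T = n%:R^-1 *: \sum_(j < n) (P j *m xi)^T by rewrite /s linearZ /= raddf_sum.
  rewrite -scalemxAl mulmx_suml.
  under eq_bigr => j _ do rewrite trmx_mul -mulmxA F1 mulmxA.
  by rewrite sumr_const card_ord -scaler_nat scalerA mulVf // scale1r.
have GAs : GA^T = GA by rewrite -(hA i0) trmx_mul trmxK.
have GCs : GC^T = GC.
  have i1 : 'I_n by exists 1%N.
  have j0 : (Ordinal (leq_trans (isT : (1 < 2)%N) hn)) != (Ordinal (leq_trans (isT : (0 < 2)%N) hn)) by [].
  by rewrite -(hC _ _ j0) trmx_mul trmxK !hC // eq_sym.
have GTs : GT^T = GT by rewrite /GT /GramT linearZ /= linearD /= linearZ /= GAs GCs.
have E : forall i, (P i *m xib - s)^T *m (P i *m xib - s) =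
   xib^T *m GA *m xib + xi^T *m GT *m (xi - 2%:R *: xib).
  move=> i; rewrite [(_ - s)^T]raddfB /= mulmxBr !mulmxBl trmx_mul.
  rewrite mulmxA -(mulmxA _ _ (P i)) hA -(mulmxA xib^T (P i)^T) F1 F2.
  have -> : s^T *m (P i *m xib) = xib^T *m (GT *m xi).
    by rewrite -[LHS]tr11 trmx_mul trmxK trmx_mul -mulmxA F1.
  have -> : xib^T *m (GT *m xi) = xi^T *m GT *m xib.
    by rewrite -[LHS]tr11 !trmx_mul trmxK GTs.
  rewrite [X in _ = _ + X]mulmxBr -[X in _ = _ + (_ - X)]scalemxAr.
  rewrite scaler_nat mulr2n opprB opprD !addrA; congr (_ + _); by rewrite addrAC.
split.
  by move=> H; rewrite -(E i0) H subrr trmx0 mul0mx.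
move=> H i; apply/eqP; rewrite -subr_eq0; apply/eqP; apply: sq0.
by rewrite E.
Qed.
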